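(* Let $n$ be a positive integer, $k$ an integer with $0\le k\le n$, and $0<\phi<\infty$. For integers $0\le \ell\le n$ and real $s$ define $$Q_\ell(s) = \frac{S(n-\ell,k,\phi e^{-s})}{S(n,k,\phi e^{-s})}.$$ Then for all real $s$, $$\frac{dQ_\ell}{ds}(s) = \phi e^{-s}\big[n\,Q_\ell(s)Q_1(s) - (n-\ell)\,Q_{\ell+1}(s)\big].$$
   Context: $S(j,k)$ denotes the (central) Stirling numbers of the second kind. The noncentral Stirling numbers of the second kind are defined, for integers $n\ge 0$, $k\ge 0$ and real $\phi$, by $S(n,k,\phi) = \sum_{r=0}^{n-k}\binom{n}{k+r}\phi^{n-k-r}S(k+r,k)$, with the convention $S(n',k,\phi)=0$ whenever $n'<k$ (including negative $n'$). For $\phi>0$ and $0\le k\le n$, $S(n,k,\phi)>0$. *)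

(* Defs.v *)
From HB Require Import structures.
From mathcomp Require Import all_boot all_order all_algebra.
From mathcomp Require Import all_classical all_reals all_analysis.
Set Implicit Arguments. Unset Strict Implicit. Unset Printing Implicit Defensive.
Import Order.TTheory GRing.Theory Num.Theory.
Local Open Scope ring_scope.

Fixpoint stirling2 (n k : nat) : nat :=
  match n, k with
  | 0, 0 => 1
  | 0, _.+1 => 0
  | _.+1, 0 => 0
  | n'.+1, k'.+1 => (k'.+1 * stirling2 n' k'.+1 + stirling2 n' k')%N
  end.

(* Noncentral Stirling numbers S(n,k,phi); the first argument is an integer,
   and S(n',k,phi) = 0 whenever n' < k (including negative n'). *)
Definition Snc (R : realType) (n : int) (k : nat) (phi : R) : R :=
  match n with
  | Posz m => if (m < k)%N then 0 else
      \sum_(r < (m - k).+1)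
        ('C(m, k + r))%:R * phi ^+ (m - k - r) * (stirling2 (k + r) k)%:R
  | Negz _ => 0
  end.

Definition Qfun (R : realType) (n k : nat) (phi : R) (l : nat) (s : R) : R :=
  Snc (n%:Z - l%:Z) k (phi * expR (- s)) / Snc n%:Z k (phi * expR (- s)).

(* Main.v *)
Require Import Defs.
From HB Require Import structures.
From mathcomp Require Import all_boot all_order all_algebra.
From mathcomp Require Import all_classical all_reals all_analysis.
From mathcomp Require Import ring lra.
Import Order.TTheory GRing.Theory Num.Theory.
Local Open Scope ring_scope.

Lemma stirling2_lt j k : (j < k)%N -> stirling2 j k = 0%N.
Proof.
elim: j k => [|j IH] [|k] //= H.
by rewrite (IH k.+1 (ltnW H)) (IH k H) muln0.
Qed.

Lemma stirling2_kk k : stirling2 k k = 1%N.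
Proof. by elim: k => //= k ->; rewrite stirling2_lt // muln0. Qed.

Lemma Snc_sum (R : realType) (m k : nat) (x : R) :
  Snc (Posz m) k x = \sum_(0 <= j < m.+1) ('C(m, j))%:R * x ^+ (m - j) * (stirling2 j k)%:R.
Proof.
rewrite /=. case: ltnP => Hmk.
  rewrite big_nat big1 // => j /andP[_ Hj]; rewrite stirling2_lt ?mulr0 //.
  exact: leq_trans Hj Hmk.
symmetry.
rewrite (big_cat_nat (n:=k)) //=; last by rewrite ltnW.
rewrite big_nat big1 ?add0r; last first.
  by move=> j /andP[_ Hj]; rewrite stirling2_lt ?mulr0.
rewrite -{1}(add0n k) big_addn big_mkord.
have -> : (m.+1 - k = (m - k).+1)%N by rewrite subSn.
apply: eq_bigr => r _; rewrite [(r + k)%N]addnC subnDA.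
by [].
Qed.

Lemma dmon (R : realType) (c : R) (n : nat) (x : R) :
  is_derive x 1 (fun y => c * y ^+ n) (c * (n%:R * x ^+ n.-1)).
Proof.
have h := is_derive_poly (c *: 'X^n) x.
have E : horner (c *: 'X^n) = (fun y => c * y ^+ n).
  by apply/funext => y; rewrite hornerZ hornerXn.
rewrite E in h.
have -> : c * (n%:R * x ^+ n.-1) = (c *: 'X^n)^`().[x].
  by rewrite derivZ derivXn hornerZ hornerMn hornerXn mulr_natl.
exact: h.
Qed.

Lemma dSnc {R : realType} (x : R) (m k : nat) :
  is_derive x 1 (fun y => Snc (Posz m) k y) (m%:R * Snc (m%:Z - 1) k x).
Proof.
pose c (j : 'I_m.+1) : R := ('C(m, j))%:R * (stirling2 j k)%:R.
have -> : (fun y => Snc (Posz m) k y) = \sum_(j < m.+1) (fun y => c j * y ^+ (m - j)).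
  apply/funext => y; rewrite fct_sumE Snc_sum big_mkord.
  by apply: eq_bigr => j _; rewrite /c; ring.
apply: is_derive_eq; first by apply: is_derive_sum => j; exact: dmon.
rewrite /c; clear c; case: m => [|m].
  by rewrite big_ord1 /= mul0r mulr0 mul0r.
have -> : (m.+1%:Z - 1 = Posz m)%R by rewrite -addn1 PoszD addrK.
rewrite Snc_sum big_mkord big_ord_recr /= subnn mul0r mulr0 addr0 mulr_sumr.
apply: eq_bigr => j _ /=.
have Hj : (j <= m)%N by rewrite -ltnS.
have -> : (m.+1 - j).-1 = (m - j)%N by rewrite subSn.
have Hb : ((m.+1 - j) * 'C(m.+1, j) = m.+1 * 'C(m, j))%N by rewrite -mul_bin_down.
rewrite subSn // -[(m - j).+1]/((m-j).+1%N).
have : ((m - j).+1%:R * ('C(m.+1, j))%:R = (m.+1)%:R * ('C(m, j))%:R :> R).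
  by rewrite -!natrM -Hb subSn.
move=> HH; rewrite -[LHS]/(_) . 
transitivity ((m - j).+1%:R * ('C(m.+1, j))%:R * (stirling2 j k)%:R * x ^+ (m - j)); first ring.
by rewrite HH; ring.
Qed.

Lemma dg {R : realType} (phi s : R) :
  is_derive s 1 (fun t => phi * expR (- t)) (- (phi * expR (- s))).
Proof.
have h1 : is_derive s 1 (expR \o -%R) (expR (- s) * (- 1)).
  exact: (is_derive1_comp (is_derive_expR (- s)) (is_deriveNid s 1)).
have h2 := is_deriveZ phi h1.
have -> : - (phi * expR (- s)) = phi * (expR (- s) * (- 1)) by ring.
exact: h2.
Qed.

Lemma dS2 (R : realType) (m k : nat) (phi s : R) :
  is_derive s 1 (fun t => Snc (Posz m) k (phi * expR (- t)))
    (m%:R * Snc (m%:Z - 1) k (phi * expR (- s)) * (- (phi * expR (- s)))).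
Proof.
have h := is_derive1_comp (g := fun t => phi * expR (- t)) (x := s) (dSnc (phi * expR (- s)) m k) (dg phi s).
exact: h.
Qed.

Lemma Snc_gt0 (R : realType) (n k : nat) (x : R) :
  (k <= n)%N -> 0 < x -> 0 < Snc (Posz n) k x.
Proof.
move=> kn x0.
have kn1 : (k < n.+1)%N by [].
rewrite Snc_sum big_mkord (bigD1 (Ordinal kn1)) //=.
have ha : 0 < ('C(n, k))%:R * x ^+ (n - k) * (stirling2 k k)%:R.
  by rewrite stirling2_kk mulr1 mulr_gt0 // ?ltr0n ?bin_gt0 // exprn_gt0.
have hb : 0 <= \sum_(i < n.+1 | i != Ordinal kn1)
    ('C(n, i))%:R * x ^+ (n - i) * (stirling2 i k)%:R.
  apply: sumr_ge0 => i _.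
  by rewrite !mulr_ge0 // exprn_ge0 // ltW.
lra.
Qed.

Theorem lemma1 (R : realType) (n k l : nat) (phi : R) :
  (0 < n)%N -> (k <= n)%N -> (l <= n)%N -> 0 < phi ->
  forall s : R,
    is_derive s 1 (Qfun n k phi l)
      (phi * expR (- s) *
        (n%:R * Qfun n k phi l s * Qfun n k phi 1 s
         - (n - l)%:R * Qfun n k phi l.+1 s)).
Proof.
move=> n0 kn ln phi0 s.
have El : (n%:Z - l%:Z) = Posz (n - l) by rewrite subzn.
have -> : Qfun n k phi l = (fun t => Snc (Posz (n - l)) k (phi * expR (- t)) *
     (Snc (Posz n) k (phi * expR (- t)))^-1).
  by apply/funext => t; rewrite /Qfun El.
have x0 : 0 < phi * expR (- s) by rewrite mulr_gt0 // expR_gt0.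
have hB : Snc (Posz n) k (phi * expR (- s)) != 0 by rewrite gt_eqF // Snc_gt0.
have hA := dS2 _ (n - l) k phi s.
have hB' := dS2 _ n k phi s.
have hV := is_deriveV (f := fun t => Snc (Posz n) k (phi * expR (- t))) hB hB'.
have hM := is_deriveM hA hV.
set X := phi * expR (- s) in hB hA hB' hV hM *.
rewrite /Qfun -/X.
have -> : (n%:Z - l.+1%:Z) = (n - l)%N%:Z - 1.
  by rewrite -El -addn1 PoszD; ring.
have -> : (n%:Z - 1%:Z) = n%:Z - 1 by [].
set A := Snc (Posz (n - l)) k X in hM *.
set B := Snc (Posz n) k X in hB hM *.
set A1 := Snc ((n - l)%N%:Z - 1) k X in hM *.
set B1 := Snc (n%:Z - 1) k X in hM *.
move: hM.
have -> : X * (n%:R * (A / B) * (B1 / B) - (n - l)%:R * (A1 / B)) =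
  A *: (- B ^- 2 *: (n%:R * B1 * - X)) + B^-1 *: ((n - l)%:R * A1 * - X).
  have sE : forall a b : R, a *: b = a * b by [].
  rewrite !sE. field. exact: hB.
by [].
Qed.
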